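(* For every integer $n\geq 3$ and every $m\in\{3,6,9,\dots,3n-6\}$ there exists a planar graph $G$ with $n$ vertices and $m$ edges such that $c(G)=n+\frac{7}{3}m-2$.
   Context: All graphs are finite, simple and undirected. A clique of a graph $G$ is a (possibly empty) set of pairwise adjacent vertices; $c(G)$ denotes the number of cliques of $G$ (including the empty clique, all single vertices and all edges). *)

(* Defs.v *)
From HB Require Import structures.
From mathcomp Require Import all_boot all_order all_algebra.
From mathcomp Require Import all_classical all_reals all_analysis.
From mathcomp Require Import Rstruct Rstruct_topology.
From Stdlib Require Import Rdefinitions.
Set Implicit Arguments. Unset Strict Implicit. Unset Printing Implicit Defensive.
Import Order.TTheory GRing.Theory Num.Theory.
Local Open Scope classical_set_scope.
Local Open Scope ring_scope.

Definition simple_graph (n : nat) (e : rel 'I_n) : Prop :=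
  symmetric e /\ irreflexive e.

Definition num_edges (n : nat) (e : rel 'I_n) : nat :=
  #|[set p : 'I_n * 'I_n | (ltn p.1 p.2) && e p.1 p.2]|.

(* cliques: (possibly empty) sets of pairwise adjacent vertices *)
Definition is_clique (n : nat) (e : rel 'I_n) (A : {set 'I_n}) : bool :=
  [forall u in A, forall v in A, (u != v) ==> e u v].

Definition num_cliques (n : nat) (e : rel 'I_n) : nat :=
  #|[set A : {set 'I_n} | is_clique e A]|.

Definition pt := (R * R)%type.

Definition unit_int (t : R) : Prop := (0 <= t <= 1)%R.

Definition jordan_arc (f : R -> pt) : Prop :=
  {within `[0%R, 1%R]%classic, continuous f} /\
  (forall s t, unit_int s -> unit_int t -> f s = f t -> s = t).

(* A planar drawing: distinct points for vertices, a Jordan arc for each edge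
   {u,v} (u < v) from pos u to pos v whose interior avoids all vertex points,
   and two distinct edge arcs meet only at vertex points (hence only at
   common endpoints). *)
Definition plane_drawing (n : nat) (e : rel 'I_n)
    (pos : 'I_n -> pt) (arc : 'I_n -> 'I_n -> R -> pt) : Prop :=
  injective pos /\
  (forall u v : 'I_n, (ltn u v) -> e u v ->
     [/\ jordan_arc (arc u v), arc u v 0%R = pos u, arc u v 1%R = pos v
       & forall (t : R) (w : 'I_n), (0 < t < 1)%R -> arc u v t <> pos w]) /\
  (forall u v u' v' : 'I_n, (ltn u v) -> e u v -> (ltn u' v') -> e u' v' ->
     (u, v) <> (u', v') ->
     forall s t, unit_int s -> unit_int t -> arc u v s = arc u' v' t ->
     exists w, arc u v s = pos w).

Definition planar (n : nat) (e : rel 'I_n) : Prop :=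
  exists pos arc, @plane_drawing n e pos arc.

(* Main.v *)
Require Import Defs.
From mathcomp Require Import all_boot all_order all_algebra.
From mathcomp Require Import zify.
Set Implicit Arguments. Unset Strict Implicit. Unset Printing Implicit Defensive.

Definition adjn (p a b : nat) : bool := [&& a < b, b < p & (a <= 1) || (a.+1 == b)].
Definition Gr (n p : nat) : rel 'I_n := fun u v => adjn p u v || adjn p v u.
Arguments Gr : clear implicits.
Definition Nn (p a : nat) : bool := (a < p) && ((a <= 1) || (a.+1 == p)).

Lemma Gr_simple n p : simple_graph (Gr n p).
Proof.
split; first by move=> u v; rewrite /Gr orbC.
by move=> u; rewrite /Gr /adjn ltnn.
Qed.

Lemma adjn_step p a b : adjn p.+1 a b = adjn p a b || ((b == p) && Nn p a).
Proof.
rewrite /adjn /Nn; case: (ltngtP b p) => [h|h|->]; rewrite ?ltnS ?leqnn ?eqxx /=.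
- by rewrite (ltnW h) /= orbF.
- by rewrite (leqNgt b p) h /= !andbF.
- by rewrite andbF.
Qed.

Lemma is_cliqueP n (e : rel 'I_n) (A : {set 'I_n}) :
  reflect (forall u v, u \in A -> v \in A -> u != v -> e u v) (is_clique e A).
Proof.
apply: (iffP forall_inP) => [H u v uA vA nuv | H u uA].
  by have /forall_inP/(_ v vA)/implyP := H u uA; apply.
by apply/forall_inP => v vA; apply/implyP; apply: H.
Qed.

Lemma Nn_adj p a b : Nn p a -> Nn p b -> a != b -> adjn p.+1 a b || adjn p.+1 b a.
Proof. rewrite /Nn /adjn. lia. Qed.

Lemma Gr_step n p (u v : 'I_n) :
  Gr n p.+1 u v = Gr n p u v || ((val v == p) && Nn p u) || ((val u == p) && Nn p v).
Proof. rewrite /Gr !adjn_step; case: (adjn p u v); case: (adjn p v u) => //=; lia. Qed.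

Lemma Gr_lt n p (u v : 'I_n) : Gr n p u v -> (u < p) && (v < p).
Proof. rewrite /Gr /adjn; lia. Qed.

Definition NS n p : {set 'I_n} := [set u : 'I_n | Nn p u].
Definition CL n p : {set {set 'I_n}} := [set A : {set 'I_n} | is_clique (Gr n p) A].

Lemma cl_single n p (P : 'I_n) (A : {set 'I_n}) : val P = p ->
  is_clique (Gr n p) A -> P \in A -> A = [set P].
Proof.
move=> hP /is_cliqueP cl PA; apply/setP => u; rewrite inE.
case: (eqVneq u P) => [->|nuP]; first by rewrite PA.
apply/negbTE/negP => uA.
by have := Gr_lt (cl u P uA PA nuP); rewrite hP ltnn andbF.
Qed.

Lemma CL_step n p (P : 'I_n) : val P = p ->
  CL n p.+1 = (CL n p :\ [set P]) :|: [set P |: B | B in powerset (NS n p)].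
Proof.
move=> hP; apply/setP => A; rewrite !inE.
have imP : forall B, B \in [set P |: B | B in powerset (NS n p)] -> P \in B.
  by move=> B /imsetP[C _ ->]; rewrite setU11.
case PA: (P \in A).
- have -> : (A != [set P]) && is_clique (Gr n p) A = false.
    by apply/negbTE/negP => /andP[neA cl]; move: neA; rewrite (cl_single hP cl PA) eqxx.
  rewrite /=; apply/idP/idP => [/is_cliqueP cl | /imsetP[B]].
    apply/imsetP; exists (A :\ P); last by rewrite setD1K.
    rewrite inE; apply/subsetP => u; rewrite !inE => /andP[nuP uA].
    have := cl u P uA PA nuP; rewrite Gr_step hP eqxx /= => /orP[/orP[H|H]|H].
    + by have := Gr_lt H; rewrite hP ltnn andbF.
    + by [].
    + have nu : val u != p by rewrite -hP (inj_eq val_inj).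
      by move: H; rewrite (negbTE nu).
  rewrite inE => sBN ->; apply/is_cliqueP => u v; rewrite !inE.
  move=> /orP[/eqP->|uB] /orP[/eqP->|vB] nuv.
  + by rewrite eqxx in nuv.
  + by rewrite Gr_step hP eqxx; have := subsetP sBN v vB; rewrite inE => ->; rewrite !orbT.
  + by rewrite Gr_step hP eqxx; have := subsetP sBN u uB; rewrite inE => ->; rewrite orbT.
  + rewrite /Gr; apply: Nn_adj.
    * by have := subsetP sBN u uB; rewrite inE.
    * by have := subsetP sBN v vB; rewrite inE.
    * by rewrite (inj_eq val_inj).
- have -> : (A != [set P]) = true.
    by apply/negP => /eqP eA; move: PA; rewrite eA set11.
  have -> : (A \in [set P |: B | B in powerset (NS n p)]) = false.
    by apply/negP => /imP; rewrite PA.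
  rewrite orbF /=; apply/is_cliqueP/is_cliqueP => cl u v uA vA nuv.
  + have nu : val u != p by rewrite -hP (inj_eq val_inj); apply: contraTneq uA => ->; rewrite PA.
    have nv : val v != p by rewrite -hP (inj_eq val_inj); apply: contraTneq vA => ->; rewrite PA.
    by have := cl u v uA vA nuv; rewrite Gr_step (negbTE nu) (negbTE nv) !orbF.
  + by rewrite Gr_step cl.
Qed.

Lemma card_CL_step n p : p < n -> #|CL n p.+1| + 1 = #|CL n p| + 2 ^ #|NS n p|.
Proof.
move=> hp; pose P := Ordinal hp.
have hP : val P = p by [].
have PNS : P \notin NS n p by rewrite inE /Nn ltnn.
have PCL : [set P] \in CL n p.
  by rewrite inE; apply/is_cliqueP => u v; rewrite !inE => /eqP-> /eqP->; rewrite eqxx.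
rewrite (CL_step hP).
have inj : {in powerset (NS n p) &, injective (fun B => P |: B)}.
  move=> B C; rewrite !inE => sB sC eBC.
  have PB : P \notin B by apply: contra PNS; apply: (subsetP sB).
  have PC : P \notin C by apply: contra PNS; apply: (subsetP sC).
  by rewrite -(setU1K PB) eBC setU1K.
have dis : (CL n p :\ [set P]) :&: [set P |: B | B in powerset (NS n p)] = set0.
  apply/setP => A; rewrite !inE; apply/negbTE/negP => /andP[/andP[nA clA] /imsetP[B _ eA]].
  by move: nA; rewrite (cl_single hP clA) ?eqxx // eA setU11.
have := cardsUI (CL n p :\ [set P]) [set P |: B | B in powerset (NS n p)].
rewrite dis cards0 addn0 => ->.
rewrite card_in_imset // card_powerset (cardsD1 [set P] (CL n p)) PCL.
by rewrite add1n addSn addnS addn0.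
Qed.

Lemma card_CL0 n : #|CL n 0| = n.+1.
Proof.
have e : CL n 0 = set0 |: [set [set x] | x : 'I_n].
  apply/setP => A; rewrite !inE; apply/idP/idP.
  - move/is_cliqueP => cl; case: (set_0Vmem A) => [->|[x xA]]; first by rewrite eqxx.
    apply/orP; right; apply/imsetP; exists x => //.
    apply/setP => u; rewrite inE; case: (eqVneq u x) => [->|nux]; first by rewrite xA.
    by apply/negbTE/negP => uA; have := Gr_lt (cl u x uA xA nux); rewrite ltn0.
  - case/orP => [/eqP->|/imsetP[x _ ->]]; apply/is_cliqueP => u v; rewrite ?inE //.
    by move=> /eqP-> /eqP->; rewrite eqxx.
rewrite e cardsU1 card_imset; last exact: set1_inj.
have -> : set0 \notin [set [set x] | x : 'I_n].
  by apply/negP => /imsetP[x _ /setP/(_ x)]; rewrite !inE eqxx.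
by rewrite card_ord.
Qed.

Definition ES n p : {set 'I_n * 'I_n} := [set q : 'I_n * 'I_n | (ltn q.1 q.2) && Gr n p q.1 q.2].

Lemma card_ES_step n p : p < n -> #|ES n p.+1| = #|ES n p| + #|NS n p|.
Proof.
move=> hp; pose P := Ordinal hp.
have hP : val P = p by [].
have e : ES n p.+1 = ES n p :|: [set (u, P) | u in NS n p].
  apply/setP => [[u v]]; rewrite !inE /= Gr_step.
  apply/idP/idP.
  - case/andP => luv /orP[/orP[H|/andP[/eqP vp Nu]]|/andP[/eqP up Nv]].
    + by rewrite luv H.
    + apply/orP; right; apply/imsetP; exists u; first by rewrite inE.
      by congr (_, _); apply: val_inj.
    + by move: Nv luv; rewrite /Nn up; lia.
  - case/orP => [/andP[-> ->] //|/imsetP[w]]; rewrite inE => Nw [-> ->].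
    have wp : w < p by move: Nw; rewrite /Nn; lia.
    by rewrite /= wp eqxx Nw !orbT.
have dis : ES n p :&: [set (u, P) | u in NS n p] = set0.
  apply/setP => q; rewrite !inE; apply/negbTE/negP => /andP[/andP[_ H] /imsetP[w _ eq]].
  by move: (Gr_lt H); rewrite eq /= ltnn andbF.
have := cardsUI (ES n p) [set (u, P) | u in NS n p].
rewrite dis cards0 addn0 -e => ->.
by rewrite card_imset // => a b [].
Qed.

Lemma card_ES0 n : #|ES n 0| = 0.
Proof.
apply/eqP; rewrite cards_eq0; apply/eqP/setP => q; rewrite !inE.
by apply/negbTE/negP => /andP[_ /Gr_lt]; rewrite ltn0.
Qed.

Lemma card_NS n p : p < n -> #|NS n p| = minn p 3.
Proof.
case: n => // n hp.
case: p hp => [|[|[|p]]] hp.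
- apply/eqP; rewrite cards_eq0; apply/eqP/setP => u; rewrite !inE /Nn ltn0 //.
- have -> : NS n.+1 1 = [set inord 0].
    apply/setP => u; rewrite !inE -(inj_eq val_inj) /= inordK /Nn; lia.
  by rewrite cards1.
- have -> : NS n.+1 2 = [set inord 0; inord 1].
    apply/setP => u; rewrite !inE -!(inj_eq val_inj) /= !inordK /Nn; lia.
  rewrite cards2 -(inj_eq val_inj) /= !inordK; lia.
- have -> : NS n.+1 p.+3 = inord 0 |: (inord 1 |: [set inord p.+2]).
    apply/setP => u; rewrite !inE -!(inj_eq val_inj) /= !inordK /Nn; lia.
  rewrite !cardsU1 cards1 !inE -!(inj_eq val_inj) /= !inordK; lia.
Qed.

Lemma counts n p : p <= n ->
  #|CL n p| = (if p == 0 then n+1 else if p == 1 then n+1 else if p == 2 then n+2 else n + 7 * p - 16)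
  /\ #|ES n p| = (if p <= 1 then 0 else if p == 2 then 1 else 3 * p - 6).
Proof.
elim: p => [|p IH] hpn; first by rewrite card_CL0 card_ES0 addn1.
have hp : p < n by [].
have [IHc IHe] := IH (ltnW hpn).
have sc := card_CL_step hp; have se := card_ES_step hp.
rewrite card_NS // in sc se.
rewrite se IHe; move: sc; rewrite IHc.
case: p {IH IHc IHe hpn hp se} => [|[|[|p]]]; rewrite /minn /= ?expnS ?expn0; move: (#|CL n _|) => x; lia.
Qed.

Unset Implicit Arguments.
From mathcomp Require Import all_classical all_reals all_analysis Rstruct Rstruct_topology.
From Stdlib Require Import Rdefinitions Raxioms RIneq Lra Psatz.
Import numFieldNormedType.Exports.

Section Aff. Local Open Scope classical_set_scope. Local Open Scope ring_scope.
Lemma aff1 (a b : R) : continuous (fun t : R => Rplus a (Rmult t b)).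
Proof.
move=> t.
have h2 : (fun x : R => x * b) x @[x --> t] --> t * b.
  by apply: cvgMl; exact: cvg_id.
have h1 : (fun _ : R => a) x @[x --> t] --> a by exact: cvg_cst.
have := @cvgD R R^o R (nbhs t) _ (fun _ => a) (fun x => x*b) a (t*b) h1 h2. exact.
Qed.
End Aff.

Section Geo.
Local Open Scope R_scope.

Definition posn (p i : nat) : pt :=
  if (i == 0)%nat then (0, 1) else if (i == 1)%nat then (0, -1)
  else if (i < p)%nat then (INR i, 0) else (INR i, 2).

Definition arcn (p a b : nat) (t : R) : pt :=
  ((posn p a).1 + t * ((posn p b).1 - (posn p a).1),
   (posn p a).2 + t * ((posn p b).2 - (posn p a).2)).

Lemma INR_ge2 w : (2 <= w)%nat -> 2 <= INR w.
Proof. move=> h; change 2 with (INR 2); apply: le_INR; apply/leP. exact h. Qed.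

Lemma posn_form p w :
  (w = 0%nat /\ posn p w = (0, 1)) \/ (w = 1%nat /\ posn p w = (0, -1)) \/
  ((2 <= w)%nat /\ (w < p)%nat /\ posn p w = (INR w, 0)) \/ ((2 <= w)%nat /\ posn p w = (INR w, 2)).
Proof.
rewrite /posn; case: w => [|[|w]] /=; [by left|by right; left|right; right].
by case: ifP => h; [left|right].
Qed.

Lemma posn_inj p a b : a <> b -> posn p a <> posn p b.
Proof.
move=> nab.
have H : forall a b, (2 <= a)%nat -> (2 <= b)%nat -> INR a = INR b -> a = b.
  by move=> ? ? _ _; apply: INR_eq.
move: nab; case: (posn_form p a) => [[-> ->]|[[-> ->]|[[a2 [_ ->]]|[a2 ->]]]];
case: (posn_form p b) => [[-> ->]|[[-> ->]|[[b2 [_ ->]]|[b2 ->]]]];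
 move=> nab E; have e1 := f_equal fst E; have e2 := f_equal snd E; simpl in e1, e2;
 try (by apply: nab); try lra;
 try (have := INR_ge2 _ a2; lra); try (have := INR_ge2 _ b2; lra);
 apply: nab; exact: H.
Qed.

Lemma arcn_cont p a b : continuous (arcn p a b).
Proof.
move=> t.
have := @cvg_pair R R R (nbhs t) _ _ _ _ _ _ _
  (aff1 ((posn p a).1) ((posn p b).1 - (posn p a).1) t)
  (aff1 ((posn p a).2) ((posn p b).2 - (posn p a).2) t).
exact.
Qed.

Lemma arcn0 p a b : arcn p a b 0 = posn p a.
Proof. rewrite /arcn; case: (posn p a) => x y /=; f_equal; ring. Qed.
Lemma arcn1 p a b : arcn p a b 1 = posn p b.
Proof. rewrite /arcn; case: (posn p a) (posn p b) => x y [x' y'] /=; f_equal; ring. Qed.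

Lemma arcn_inj p a b s t : a <> b -> arcn p a b s = arcn p a b t -> s = t.
Proof.
move=> /(posn_inj p); rewrite /arcn.
case: (posn p a) (posn p b) => x y [x' y'] /= ne [e1 e2].
case: (Req_dec x x') => hx; case: (Req_dec y y') => hy.
- by subst; case: ne.
- nra.
- nra.
- nra.
Qed.

Lemma posn_mid p w : (2 <= w)%nat -> (w < p)%nat -> posn p w = (INR w, 0).
Proof. by rewrite /posn; case: w => [|[|w]] //= _ ->. Qed.

Lemma adj_form p a b : adjn p a b ->
  (a = 0%nat /\ b = 1%nat /\ forall t, arcn p a b t = (0, 1 - 2 * t)) \/
  (a = 0%nat /\ (2 <= b)%nat /\ (b < p)%nat /\ forall t, arcn p a b t = (t * INR b, 1 - t)) \/
  (a = 1%nat /\ (2 <= b)%nat /\ (b < p)%nat /\ forall t, arcn p a b t = (t * INR b, -1 + t)) \/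
  ((2 <= a)%nat /\ b = a.+1 /\ (b < p)%nat /\ forall t, arcn p a b t = (INR a + t, 0)).
Proof.
rewrite /adjn => H.
have : (a = 0 /\ b = 1)%nat \/ (a = 0 /\ 2 <= b /\ b < p)%nat \/ (a = 1 /\ 2 <= b /\ b < p)%nat
         \/ (2 <= a /\ b = a.+1 /\ b < p)%nat by move: H; lia.
case=> [[-> ->]|[[-> [b2 bp]]|[[-> [b2 bp]]|[a2 [-> bp]]]]].
- left; split=> //; split=> // t; rewrite /arcn /posn /=; f_equal; ring.
- right; left; do 3 split => //; move=> t; rewrite /arcn (posn_mid _ _ b2 bp) /posn /=; f_equal; ring.
- right; right; left; do 3 split => //; move=> t; rewrite /arcn (posn_mid _ _ b2 bp) /posn /=; f_equal; ring.
- right; right; right; do 3 split => //; move=> t.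
  rewrite /arcn (posn_mid _ _ _ bp) ?(posn_mid _ _ a2) ?S_INR /=; try lia; f_equal; ring.
Qed.

Lemma int1 a b s : 0 <= s <= 1 -> INR a + s = INR b -> s = 0 \/ s = 1.
Proof.
move=> hs e.
have : (b <= a)%coq_nat \/ (a.+1 <= b)%coq_nat by lia.
case=> h; [have := le_INR _ _ h | have := le_INR _ _ h; rewrite S_INR]; lra.
Qed.

Lemma int2 a b s t : a <> b -> 0 <= s <= 1 -> 0 <= t <= 1 -> INR a + s = INR b + t ->
  s = 0 \/ s = 1.
Proof.
move=> nab hs ht e.
have : (b.+1 <= a)%coq_nat \/ (a.+1 <= b)%coq_nat by lia.
case=> h; have := le_INR _ _ h; rewrite S_INR; lra.
Qed.

Lemma arc_int p a b t w : adjn p a b -> 0 < t < 1 -> arcn p a b t <> posn p w.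
Proof.
move=> H ht.
case: (adj_form _ _ _ H) => [[_ [_ F]]|[[_ [b2 [_ F]]]|[[_ [b2 [_ F]]]|[a2 [_ [_ F]]]]]]; rewrite F;
case: (posn_form p w) => [[_ ->]|[[_ ->]|[[w2 [_ ->]]|[w2 ->]]]] => E;
have e1 := f_equal fst E; have e2 := f_equal snd E; simpl in e1, e2;
try (have := INR_ge2 _ w2); try lra.
case: (int1 _ _ _ (ltac:(lra) : 0 <= t <= 1) e1); lra.
Qed.

Lemma cross p a b a' b' s t : adjn p a b -> adjn p a' b' -> (a, b) <> (a', b') ->
  0 <= s <= 1 -> 0 <= t <= 1 -> arcn p a b s = arcn p a' b' t -> s = 0 \/ s = 1.
Proof.
move=> H1 H2; move: (adj_form _ _ _ H1) (adj_form _ _ _ H2) => F1 F2 neq hs ht.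
move: neq.
case: F1 => [[-> [-> F]]|[[-> [b2 [bp F]]]|[[-> [b2 [bp F]]]|[a2 [-> [bp F]]]]]];
case: F2 => [[-> [-> F']]|[[-> [c2 [cp F']]]|[[-> [c2 [cp F']]]|[d2 [-> [dp F']]]]]];
rewrite F F' => neq E; have e1 := f_equal fst E; have e2 := f_equal snd E; simpl in e1, e2;
try (have := INR_ge2 _ b2); try (have := INR_ge2 _ c2); try (have := INR_ge2 _ a2);
try (have := INR_ge2 _ d2);
first [left; nra | right; nra | exfalso; nra | idtac]; move=> *.
- by case: neq.
- left; have st : s = t by lra.
  subst t; case: (Req_dec s 0) => // hs0; exfalso; apply: neq; f_equal.
  exact: INR_eq (Rmult_eq_reg_l s _ _ e1 hs0).
- left; have st : s = t by lra.
  subst t; case: (Req_dec s 0) => // hs0; exfalso; apply: neq; f_equal.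
  exact: INR_eq (Rmult_eq_reg_l s _ _ e1 hs0).
- have t1 : t = 1 by lra.
  subst t; apply: (int1 a b' s hs); rewrite e1; ring.
- have t1 : t = 1 by lra.
  subst t; apply: (int1 a b' s hs); rewrite e1; ring.
- apply: (int2 _ _ _ _ _ hs ht e1) => eaa; apply: neq; by rewrite eaa.
Qed.

End Geo.

Lemma num_edgesE n (e : rel 'I_n) :
  num_edges e = #|[set q : 'I_n * 'I_n | (ltn q.1 q.2) && e q.1 q.2]|.
Proof.
apply: eq_card => q; rewrite [RHS]inE; apply/idP/idP.
- by rewrite in_setE.
- by move=> h; rewrite in_setE.
Qed.
Lemma num_cliquesE n (e : rel 'I_n) :
  num_cliques e = #|[set A : {set 'I_n} | is_clique e A]|.
Proof.
apply: eq_card => q; rewrite [RHS]inE; apply/idP/idP.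
- by rewrite in_setE.
- by move=> h; rewrite in_setE.
Qed.

Lemma Gr_adj n p (u v : 'I_n) : (u < v)%nat -> Gr n p u v -> adjn p u v.
Proof. rewrite /Gr => luv /orP[//|]; rewrite /adjn; lia. Qed.

Lemma Gr_planar n p : planar (Gr n p).
Proof.
exists (fun u : 'I_n => posn p u), (fun u v : 'I_n => arcn p u v).
split; [|split].
- move=> u v /= e; apply: val_inj; case: (eqVneq (val u) (val v)) => [//|/eqP ne].
  by case: (posn_inj p _ _ ne e).
- move=> u v luv /(Gr_adj _ _ _ _ luv) H; split.
  + split; first exact: continuous_subspaceT (arcn_cont p u v).
    move=> s t _ _; apply: arcn_inj => e; move: luv; rewrite /ltn /= e; lia.
  + exact: arcn0.
  + exact: arcn1.
  + by move=> t w ht; apply: arc_int.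
- move=> u v u' v' luv /(Gr_adj _ _ _ _ luv) H luv' /(Gr_adj _ _ _ _ luv') H' neq s t hs ht E.
  have neq' : (nat_of_ord u, nat_of_ord v) <> (nat_of_ord u', nat_of_ord v').
    by case=> /val_inj e1 /val_inj e2; apply: neq; rewrite e1 e2.
  case: (cross _ _ _ _ _ _ _ H H' neq' hs ht E) => ->.
  + by exists u; rewrite arcn0.
  + by exists v; rewrite arcn1.
Qed.

Import GRing.Theory.
Delimit Scope nat_scope with N.
Local Open Scope ring_scope.

Theorem proposition7 (n m : nat) :
  (3 <= n)%N -> (3 %| m)%N -> (3 <= m)%N -> (m <= 3 * n - 6)%N ->
  exists e : rel 'I_n,
    [/\ simple_graph e, planar e, num_edges e = m &
        (num_cliques e)%:R = n%:R + (7%:R / 3%:R) * m%:R - 2%:R :> rat].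
Proof.
move=> n3 dm m3 mle.
have [k km] : exists k, m = (k * 3)%N by exists (m %/ 3)%N; rewrite divnK.
subst m.
have pn : (k + 2 <= n)%N by lia.
have k1 : (1 <= k)%N by lia.
exists (Gr n (k + 2)); have [hc he] := counts pn.
have h1 : (k + 2 == 0)%N = false by lia.
have h2 : (k + 2 == 1)%N = false by lia.
have h3 : (k + 2 == 2)%N = false by lia.
have h4 : (k + 2 <= 1)%N = false by lia.
split.
- exact: Gr_simple.
- exact: Gr_planar.
- rewrite num_edgesE -/(ES n (k + 2)).
  rewrite he h3 h4; lia.
- rewrite num_cliquesE -/(CL n (k + 2)).
  rewrite hc h1 h2 h3.
  have -> : (n + 7 * (k + 2) - 16 = (n + 7 * k) - 2)%N by lia.
  rewrite natrB; last by lia.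
  rewrite natrD !natrM [_ * 3%:R]mulrC mulrA -(mulrA 7%:R) mulVf ?mulr1 //.
Qed.
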